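(* Let $\triangle ABC$ be a triangle with side lengths $a=|BC|$, $b=|CA|$, $c=|AB|$ satisfying $a>b>c$, and with angles $\alpha=\angle A$, $\beta=\angle B$, $\gamma=\angle C$ (so $\alpha>\beta>\gamma$). For each side $x\in\{a,b,c\}$ that admits an inscribed equilateral triangle with one side lying on $x$, let $T_x$ be such an inscribed equilateral triangle of largest area on side $x$. Then: (Max) Among the sides admitting such a triangle, the largest area of $T_x$ is attained exactly on the long side $a$ when $\beta\neq 60^\circ$, and exactly on the sides $a$ and $c$ when $\beta=60^\circ$. (Min) The smallest area of $T_x$ (over the sides admitting such a triangle) is attained: A. exactly on side $c$ when $\alpha>120^\circ$, and exactly on sides $b$ and $c$ when $\alpha=120^\circ$; B. exactly on side $b$ when $60^\circ<\alpha<120^\circ$ and $\beta<60^\circ$; C. exactly on side $b$ when $\beta\ge 60^\circ$.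
   Context: An equilateral triangle is inscribed in $\triangle ABC$ if all three of its vertices lie on the boundary of $\triangle ABC$. An inscribed equilateral triangle ''on side $x$'' is one having one of its sides contained in the side $x$ of $\triangle ABC$. If both angles of $\triangle ABC$ at the endpoints of side $x$ exceed $60^\circ$, no inscribed equilateral triangle exists on that side, and that side is excluded from the comparison. The inscribed equilateral triangle of largest area among the (at most three) triangles $T_a,T_b,T_c$ is called the max inscribed equilateral triangle, and the one of smallest area the min inscribed equilateral triangle. *)

(* Defs.v *)
From Stdlib Require Export Reals Lra.
Open Scope R_scope.

Definition pt : Type := (R * R)%type.

Definition dist (P Q : pt) : R :=
  sqrt ((fst Q - fst P) ^ 2 + (snd Q - snd P) ^ 2).

Definition on_seg (X Y P : pt) : Prop :=
  exists t : R, 0 <= t <= 1 /\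
    P = (fst X + t * (fst Y - fst X), snd X + t * (snd Y - snd X)).

Definition on_boundary (A B C P : pt) : Prop :=
  on_seg A B P \/ on_seg B C P \/ on_seg C A P.

Definition collinear (A B C : pt) : Prop :=
  (fst B - fst A) * (snd C - snd A) - (snd B - snd A) * (fst C - fst A) = 0.

Definition area (P Q S : pt) : R :=
  Rabs ((fst Q - fst P) * (snd S - snd P) - (snd Q - snd P) * (fst S - fst P)) / 2.

Definition equilateral (P Q R : pt) : Prop :=
  P <> Q /\ dist P Q = dist Q R /\ dist Q R = dist R P.

Definition angle (V X Y : pt) : R :=
  acos (((fst X - fst V) * (fst Y - fst V) + (snd X - snd V) * (snd Y - snd V))
        / (dist V X * dist V Y)).

Definition inscribed_eq_on (A B C X Y P Q R : pt) : Prop :=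
  equilateral P Q R /\ on_seg X Y P /\ on_seg X Y Q /\
  on_boundary A B C P /\ on_boundary A B C Q /\ on_boundary A B C R.

Definition admits (A B C X Y : pt) : Prop :=
  exists P Q R, inscribed_eq_on A B C X Y P Q R.

Definition max_area_on (A B C X Y : pt) (m : R) : Prop :=
  (exists P Q R, inscribed_eq_on A B C X Y P Q R /\ area P Q R = m) /\
  (forall P Q R, inscribed_eq_on A B C X Y P Q R -> area P Q R <= m).

(* Main.v *)
Require Import Defs.

Definition D2 (P Q : pt) : R := (fst Q - fst P)^2 + (snd Q - snd P)^2.

Lemma sq_eq_pos (a b : R) : 0 <= a -> 0 <= b -> a^2 = b^2 -> a = b.
Proof. intros Ha Hb H. nra. Qed.

Lemma s3_pos : 0 < sqrt 3.
Proof. apply sqrt_lt_R0; lra. Qed.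

Lemma s3_sq : sqrt 3 ^ 2 = 3.
Proof. rewrite <- Rsqr_pow2; apply Rsqr_sqrt; lra. Qed.

Lemma core1 (P Q T : pt) (o1 o2 e1 e2 f1 f2 u v w : R) :
 fst P = o1 + u*e1 -> snd P = o2 + u*e2 ->
 fst Q = o1 + v*e1 -> snd Q = o2 + v*e2 ->
 fst T = o1 + w*f1 -> snd T = o2 + w*f2 ->
 e1*f2 - e2*f1 <> 0 ->
 0 <= u <= 1 -> 0 <= v <= 1 -> 0 <= w <= 1 ->
 P <> Q -> D2 P Q = D2 Q T -> D2 Q T = D2 T P ->
 0 < w /\
 area P Q T = Rabs (e1*f2-e2*f1)^2*w^2/(sqrt 3 * (e1^2+e2^2)) /\
 Rabs (e1*f2-e2*f1) <= sqrt 3 * (e1*f1+e2*f2) /\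
 w*(sqrt 3 * (e1*f1+e2*f2) + Rabs (e1*f2-e2*f1)) <= sqrt 3 * (e1^2+e2^2).
Proof.
  intros hp1 hp2 hq1 hq2 hr1 hr2 HK Hu Hv Hw HPQ H1 H2.
  set (L := e1^2+e2^2). set (d := e1*f1+e2*f2). set (K := e1*f2-e2*f1).
  set (k := Rabs K). set (s := sqrt 3).
  assert (Hs : 0 < s) by apply s3_pos.
  assert (Hs2 : s^2 = 3) by apply s3_sq.
  assert (Hk2 : k^2 = K^2) by apply pow2_abs.
  assert (Hk0 : 0 < k) by (apply Rabs_pos_lt; exact HK).
  assert (Huv : u <> v).
  { intro E; apply HPQ; destruct P as [p1 p2], Q as [q1 q2]; simpl in *.
    subst; reflexivity. }
  assert (HL : 0 < L).
  { assert (L <> 0).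
    { intro E; apply HK. unfold L in E. assert (e1 = 0) by nra.
      assert (e2 = 0) by nra. subst. ring. }
    unfold L in *; nra. }
  unfold D2 in H1, H2.
  rewrite hp1, hp2, hq1, hq2, hr1, hr2 in H1, H2.
  assert (h1 : (u+v)*L = 2*w*d).
  { assert (E : (v-u)*((u+v)*L - 2*w*d) = 0).
    { unfold L, d. lra. }
    apply Rmult_integral in E. destruct E as [E|E]; [exfalso; apply Huv; lra | lra]. }
  assert (h2 : 3*((v-u)^2*L^2) = 4*(w^2*K^2)).
  { assert (E1 : (v-u)^2*L = (w*f1-u*e1)^2 + (w*f2-u*e2)^2) by (unfold L; lra).
    assert (E2 : L*((w*f1-u*e1)^2 + (w*f2-u*e2)^2) = (w*d-u*L)^2 + w^2*K^2)
      by (unfold L, d, K; ring).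
    assert (E3 : w*d - u*L = (v-u)*L/2) by lra.
    rewrite E3 in E2. rewrite <- E1 in E2. lra. }
  assert (h3 : s*(Rabs (v-u)*L) = 2*w*k).
  { apply sq_eq_pos.
    - apply Rmult_le_pos; [lra|]. apply Rmult_le_pos; [apply Rabs_pos|lra].
    - apply Rmult_le_pos; [|apply Rabs_pos]; lra.
    - replace ((s*(Rabs (v-u)*L))^2) with (s^2*(Rabs (v-u))^2*L^2) by ring.
      replace ((2*w*k)^2) with (4*(w^2*k^2)) by ring.
      rewrite Hs2, pow2_abs, Hk2. lra. }
  assert (Hw0 : 0 < w).
  { destruct (Req_dec w 0) as [E|E]; [|lra].
    exfalso. rewrite E in h3. assert (Rabs (v-u) = 0).
    { assert (Hx : s * L * Rabs (v-u) = 0) by lra.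
      apply Rmult_integral in Hx. destruct Hx as [Hx|Hx]; [|exact Hx].
      exfalso. assert (0 < s*L) by (apply Rmult_lt_0_compat; lra). lra. }
    apply Huv. destruct (Rcase_abs (v-u)); [rewrite Rabs_left in H|rewrite Rabs_right in H]; lra. }
  assert (Har : area P Q T = Rabs (v-u) * w * k / 2).
  { unfold area. rewrite hp1, hp2, hq1, hq2, hr1, hr2.
    replace ((o1 + v * e1 - (o1 + u * e1)) * (o2 + w * f2 - (o2 + u * e2)) -
        (o2 + v * e2 - (o2 + u * e2)) * (o1 + w * f1 - (o1 + u * e1)))
      with ((v-u)*w*K) by (unfold K; ring).
    rewrite !Rabs_mult. rewrite (Rabs_right w) by lra. reflexivity. }
  split; [exact Hw0|]. split.
  { rewrite Har. fold K. fold k. fold L.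
    assert (Rabs (v-u) = 2*w*k/(s*L)).
    { apply (Rmult_eq_reg_l (s*L)); [|nra]. field_simplify; [lra|lra]. }
    rewrite H. field. split; lra. }
  assert (Hsd : s*(u+v)*L = 2*s*w*d) by (rewrite Rmult_assoc, h1; ring).
  assert (Hu0 : 0 <= s*u*L) by (apply Rmult_le_pos; [apply Rmult_le_pos|]; lra).
  assert (Hv0 : 0 <= s*v*L) by (apply Rmult_le_pos; [apply Rmult_le_pos|]; lra).
  assert (Hu1 : s*u*L <= s*L) by (assert (0 <= s*(1-u)*L) by (apply Rmult_le_pos; [apply Rmult_le_pos|]; lra); lra).
  assert (Hv1 : s*v*L <= s*L) by (assert (0 <= s*(1-v)*L) by (apply Rmult_le_pos; [apply Rmult_le_pos|]; lra); lra).
  assert (Hfin : 0 <= w*(s*d - k) /\ w*(s*d+k) <= s*L).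
  { destruct (Rle_dec u v) as [Huv'|Huv'].
    - rewrite Rabs_right in h3 by lra. split; lra.
    - rewrite Rabs_left in h3 by lra. split; lra. }
  destruct Hfin as [F1 F2]. split; [|exact F2].
  destruct (Rle_dec k (s*d)) as [G|G]; [exact G|].
  exfalso. assert (0 < w*(k - s*d)) by (apply Rmult_lt_0_compat; lra). lra.
Qed.


Lemma core2 (o1 o2 e1 e2 f1 f2 w : R) :
 e1*f2 - e2*f1 <> 0 -> 0 < w <= 1 ->
 Rabs (e1*f2-e2*f1) <= sqrt 3 * (e1*f1+e2*f2) ->
 w*(sqrt 3 * (e1*f1+e2*f2) + Rabs (e1*f2-e2*f1)) <= sqrt 3 * (e1^2+e2^2) ->
 exists u v, 0 <= u <= 1 /\ 0 <= v <= 1 /\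
 forall P Q T : pt,
 fst P = o1 + u*e1 -> snd P = o2 + u*e2 ->
 fst Q = o1 + v*e1 -> snd Q = o2 + v*e2 ->
 fst T = o1 + w*f1 -> snd T = o2 + w*f2 ->
 P <> Q /\ D2 P Q = D2 Q T /\ D2 Q T = D2 T P /\
 area P Q T = Rabs (e1*f2-e2*f1)^2*w^2/(sqrt 3 * (e1^2+e2^2)).
Proof.
  intros HK Hw Hd Hb.
  set (L := e1^2+e2^2) in *. set (d := e1*f1+e2*f2) in *. set (K := e1*f2-e2*f1) in *.
  set (k := Rabs K) in *. set (s := sqrt 3) in *.
  assert (Hs : 0 < s) by apply s3_pos.
  assert (Hs2 : s^2 = 3) by apply s3_sq.
  assert (Hk2 : k^2 = K^2) by apply pow2_abs.
  assert (Hk0 : 0 < k) by (apply Rabs_pos_lt; exact HK).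
  assert (HL : 0 < L).
  { assert (L <> 0).
    { intro E; apply HK. unfold L in E. assert (e1 = 0) by nra.
      assert (e2 = 0) by nra. unfold K. subst. ring. }
    unfold L in *; nra. }
  set (u := w*(s*d - k)/(s*L)). set (v := w*(s*d+k)/(s*L)).
  assert (HsL : 0 < s*L) by (apply Rmult_lt_0_compat; lra).
  assert (Hu0 : 0 <= u).
  { unfold u. apply Rmult_le_pos; [apply Rmult_le_pos; lra|].
    left; apply Rinv_0_lt_compat; lra. }
  assert (Hvu : v - u = 2*w*k/(s*L)) by (unfold u, v; field; lra).
  assert (Hvu0 : 0 < v - u).
  { rewrite Hvu. apply Rdiv_lt_0_compat; [|lra]. nra. }
  assert (Hv1 : v <= 1).
  { unfold v. apply (Rmult_le_reg_r (s*L)); [lra|].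
    field_simplify; [|lra]. lra. }
  exists u, v. split; [lra|]. split; [lra|].
  intros P Q T hp1 hp2 hq1 hq2 hr1 hr2.
  assert (E1 : (v-u)*L = 2*w*k/s) by (rewrite Hvu; field; lra).
  assert (E2 : w*d - u*L = w*k/s) by (unfold u; field; lra).
  assert (E3 : (u+v)*L = 2*w*d) by (unfold u, v; field; lra).
  unfold D2. rewrite hp1, hp2, hq1, hq2, hr1, hr2.
  split.
  { intro E. rewrite E in hp1, hp2. rewrite hp1 in hq1. rewrite hp2 in hq2.
    assert ((v-u)*e1 = 0) by lra. assert ((v-u)*e2 = 0) by lra.
    assert (e1 = 0).
    { apply Rmult_integral in H. destruct H; [lra|assumption]. }
    assert (e2 = 0).
    { apply Rmult_integral in H0. destruct H0; [lra|assumption]. }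
    apply HK. unfold K. rewrite H1, H2. ring. }
  assert (F1 : (o2 + w * f2 - (o2 + v * e2)) ^ 2 + (o1 + w * f1 - (o1 + v * e1)) ^ 2
             - ((o2 + u * e2 - (o2 + w * f2)) ^ 2 + (o1 + u * e1 - (o1 + w * f1)) ^ 2)
             = (v-u)*((u+v)*L - 2*w*d)) by (unfold L, d; ring).
  assert (F2 : L*((o1 + u * e1 - (o1 + w * f1)) ^ 2 + (o2 + u * e2 - (o2 + w * f2)) ^ 2)
             = (w*d-u*L)^2 + w^2*K^2) by (unfold L, d, K; ring).
  assert (F3 : L*((o1 + v * e1 - (o1 + u * e1)) ^ 2 + (o2 + v * e2 - (o2 + u * e2)) ^ 2)
             = ((v-u)*L)^2) by (unfold L; ring).
  rewrite E2 in F2. rewrite E1 in F3.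
  assert (G : (w*k/s)^2 = w^2*k^2/3) by (rewrite <- Hs2; field; lra).
  assert (G2 : (2*w*k/s)^2 = 4*(w^2*k^2)/3) by (rewrite <- Hs2; field; lra).
  rewrite G in F2. rewrite G2 in F3. rewrite <- Hk2 in F2.
  assert (F4 : (o1 + v * e1 - (o1 + u * e1)) ^ 2 + (o2 + v * e2 - (o2 + u * e2)) ^ 2 =
               (o1 + u * e1 - (o1 + w * f1)) ^ 2 + (o2 + u * e2 - (o2 + w * f2)) ^ 2).
  { apply (Rmult_eq_reg_l L); [|lra]. rewrite F2, F3. field. }
  split; [ring_simplify; ring_simplify in F4; ring_simplify in F1; nra|].
  split; [nra|].
  unfold area. rewrite hp1, hp2, hq1, hq2, hr1, hr2.
  replace ((o1 + v * e1 - (o1 + u * e1)) * (o2 + w * f2 - (o2 + u * e2)) -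
        (o2 + v * e2 - (o2 + u * e2)) * (o1 + w * f1 - (o1 + u * e1)))
      with ((v-u)*w*K) by (unfold K; ring).
  rewrite !Rabs_mult. rewrite (Rabs_right w) by lra. rewrite (Rabs_right (v-u)) by lra.
  fold k. rewrite Hvu. field. lra.
Qed.


Definition Cr (X Y Z : pt) := (fst Y - fst X)*(snd Z - snd X) - (snd Y - snd X)*(fst Z - fst X).
Definition Dt (V X Y : pt) := (fst X - fst V)*(fst Y - fst V) + (snd X - snd V)*(snd Y - snd V).
Definition L2 (X Y : pt) := (fst Y - fst X)^2 + (snd Y - snd X)^2.

Lemma dist_D2 P Q : dist P Q = sqrt (D2 P Q).
Proof. reflexivity. Qed.

Lemma D2_nonneg P Q : 0 <= D2 P Q.
Proof. unfold D2. assert (H1 := pow2_ge_0 (fst Q - fst P)). assert (H2 := pow2_ge_0 (snd Q - snd P)). lra. Qed.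

Lemma seg_coords X Y P : on_seg X Y P -> exists t, 0 <= t <= 1 /\
  fst P = fst X + t*(fst Y - fst X) /\ snd P = snd X + t*(snd Y - snd X).
Proof. intros [t [Ht E]]. exists t. rewrite E. simpl. auto. Qed.

Lemma collinear_contra (o1 o2 e1 e2 u v t : R) (P Q T : pt) :
  fst P = o1 + u*e1 -> snd P = o2 + u*e2 ->
  fst Q = o1 + v*e1 -> snd Q = o2 + v*e2 ->
  fst T = o1 + t*e1 -> snd T = o2 + t*e2 ->
  P <> Q -> D2 P Q = D2 Q T -> D2 Q T = D2 T P -> False.
Proof.
  intros hp1 hp2 hq1 hq2 ht1 ht2 HPQ H1 H2.
  assert (Huv : u <> v).
  { intro E; apply HPQ; destruct P as [p1 p2], Q as [q1 q2]; simpl in *.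
    subst; reflexivity. }
  unfold D2 in H1, H2. rewrite hp1, hp2, hq1, hq2, ht1, ht2 in H1, H2.
  set (L := e1^2+e2^2).
  assert (E1 : (v-u)^2*L = (t-v)^2*L) by (unfold L; lra).
  assert (E2 : (t-v)^2*L = (u-t)^2*L) by (unfold L; lra).
  assert (HL : L <> 0).
  { intro E. unfold L in E. assert (e1 = 0) by nra. assert (e2 = 0) by nra.
    apply HPQ. destruct P as [p1 p2], Q as [q1 q2]; simpl in *. subst.
    f_equal; lra. }
  apply Rmult_eq_reg_r in E1; [|exact HL]. apply Rmult_eq_reg_r in E2; [|exact HL].
  assert (v - u <> 0) by lra.
  assert (((t-v) - (v-u))*((t-v)+(v-u)) = 0) by nra.
  apply Rmult_integral in H0. destruct H0.
  -
    assert (Z1 : (u-t) = -2*(v-u)) by lra. rewrite Z1 in E2. nra.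
  - assert (Z1 : u - t = 0) by lra. rewrite Z1 in E2. nra.
Qed.

Definition bnd A B C X Y Z :=
  forall P, on_boundary A B C P <-> on_seg X Y P \/ on_seg Y Z P \/ on_seg Z X P.

Lemma analysis A B C X Y Z P Q T :
  Cr X Y Z <> 0 -> bnd A B C X Y Z -> inscribed_eq_on A B C X Y P Q T ->
  exists w, 0 < w <= 1 /\
   area P Q T = Rabs (Cr X Y Z)^2*w^2/(sqrt 3 * L2 X Y) /\
   ((Rabs (Cr X Y Z) <= sqrt 3 * Dt X Y Z /\
      w*(sqrt 3 * Dt X Y Z + Rabs (Cr X Y Z)) <= sqrt 3 * L2 X Y) \/
    (Rabs (Cr X Y Z) <= sqrt 3 * Dt Y X Z /\
      w*(sqrt 3 * Dt Y X Z + Rabs (Cr X Y Z)) <= sqrt 3 * L2 X Y)).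
Proof.
  intros HK Hb [[HPQ [Hd1 Hd2]] [HsP [HsQ [_ [_ HbT]]]]].
  rewrite !dist_D2 in Hd1, Hd2.
  apply sqrt_inj in Hd1; try apply D2_nonneg.
  apply sqrt_inj in Hd2; try apply D2_nonneg.
  apply seg_coords in HsP. destruct HsP as [u [Hu [hp1 hp2]]].
  apply seg_coords in HsQ. destruct HsQ as [v [Hv [hq1 hq2]]].
  apply Hb in HbT. destruct HbT as [HT|[HT|HT]];
    apply seg_coords in HT; destruct HT as [t [Ht [ht1 ht2]]].
  - exfalso. exact (collinear_contra (fst X) (snd X) (fst Y - fst X) (snd Y - snd X) u v t P Q T hp1 hp2 hq1 hq2 ht1 ht2 HPQ Hd1 Hd2).
  - assert (K1 : (fst X - fst Y) * (snd Z - snd Y) - (snd X - snd Y) * (fst Z - fst Y) <> 0)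
      by (unfold Cr in HK; intro; apply HK; lra).
    destruct (core1 P Q T (fst Y) (snd Y) (fst X - fst Y) (snd X - snd Y)
               (fst Z - fst Y) (snd Z - snd Y) (1-u) (1-v) t) as [W1 [W2 [W3 W4]]];
      try lra; auto.
    replace (Rabs ((fst X - fst Y) * (snd Z - snd Y) - (snd X - snd Y) * (fst Z - fst Y)))
      with (Rabs (Cr X Y Z)) in W2, W3, W4
      by (rewrite <- Rabs_Ropp; f_equal; unfold Cr; ring).
    replace ((fst X - fst Y)^2 + (snd X - snd Y)^2) with (L2 X Y) in W2, W4
      by (unfold L2; ring).
    exists t. split; [lra|]. split; [exact W2|]. right. split; [exact W3|exact W4].
  - destruct (core1 P Q T (fst X) (snd X) (fst Y - fst X) (snd Y - snd X)
               (fst Z - fst X) (snd Z - snd X) u v (1-t)) as [W1 [W2 [W3 W4]]];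
      try lra; auto.
    exists (1-t). split; [lra|]. split; [exact W2|]. left. split; [exact W3|exact W4].
Qed.

Lemma construct A B C X Y Z w :
  Cr X Y Z <> 0 -> bnd A B C X Y Z -> 0 < w <= 1 ->
   ((Rabs (Cr X Y Z) <= sqrt 3 * Dt X Y Z /\
      w*(sqrt 3 * Dt X Y Z + Rabs (Cr X Y Z)) <= sqrt 3 * L2 X Y) \/
    (Rabs (Cr X Y Z) <= sqrt 3 * Dt Y X Z /\
      w*(sqrt 3 * Dt Y X Z + Rabs (Cr X Y Z)) <= sqrt 3 * L2 X Y)) ->
  exists P Q T, inscribed_eq_on A B C X Y P Q T /\
    area P Q T = Rabs (Cr X Y Z)^2*w^2/(sqrt 3 * L2 X Y).
Proof.
  intros HK Hb Hw [[H1 H2]|[H1 H2]].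
  - destruct (core2 (fst X) (snd X) (fst Y - fst X) (snd Y - snd X)
               (fst Z - fst X) (snd Z - snd X) w HK Hw H1 H2) as [u [v [Hu [Hv Hc]]]].
    set (P := (fst X + u*(fst Y - fst X), snd X + u*(snd Y - snd X))).
    set (Q := (fst X + v*(fst Y - fst X), snd X + v*(snd Y - snd X))).
    set (T := (fst Z + (1-w)*(fst X - fst Z), snd Z + (1-w)*(snd X - snd Z))).
    destruct (Hc P Q T) as [G1 [G2 [G3 G4]]]; try (simpl; ring).
    exists P, Q, T. split; [|exact G4].
    assert (sP : on_seg X Y P) by (exists u; split; [lra|reflexivity]).
    assert (sQ : on_seg X Y Q) by (exists v; split; [lra|reflexivity]).
    assert (sT : on_seg Z X T) by (exists (1-w); split; [lra|reflexivity]).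
    split; [|split; [exact sP|split; [exact sQ|]]].
    + split; [exact G1|]. rewrite !dist_D2, G2, G3. split; reflexivity.
    + split; [apply Hb; auto|split; apply Hb; auto].
  - assert (K1 : (fst X - fst Y) * (snd Z - snd Y) - (snd X - snd Y) * (fst Z - fst Y) <> 0)
      by (unfold Cr in HK; intro; apply HK; lra).
    replace (Rabs (Cr X Y Z)) with
      (Rabs ((fst X - fst Y) * (snd Z - snd Y) - (snd X - snd Y) * (fst Z - fst Y))) in *
      by (rewrite <- Rabs_Ropp; f_equal; unfold Cr; ring).
    replace (L2 X Y) with ((fst X - fst Y)^2 + (snd X - snd Y)^2) in *
      by (unfold L2; ring).
    destruct (core2 (fst Y) (snd Y) (fst X - fst Y) (snd X - snd Y)
               (fst Z - fst Y) (snd Z - snd Y) w K1 Hw H1 H2) as [u [v [Hu [Hv Hc]]]].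
    set (P := (fst X + (1-u)*(fst Y - fst X), snd X + (1-u)*(snd Y - snd X))).
    set (Q := (fst X + (1-v)*(fst Y - fst X), snd X + (1-v)*(snd Y - snd X))).
    set (T := (fst Y + w*(fst Z - fst Y), snd Y + w*(snd Z - snd Y))).
    destruct (Hc P Q T) as [G1 [G2 [G3 G4]]]; try (simpl; ring).
    exists P, Q, T. split; [|exact G4].
    assert (sP : on_seg X Y P) by (exists (1-u); split; [lra|reflexivity]).
    assert (sQ : on_seg X Y Q) by (exists (1-v); split; [lra|reflexivity]).
    assert (sT : on_seg Y Z T) by (exists w; split; [lra|reflexivity]).
    split; [|split; [exact sP|split; [exact sQ|]]].
    + split; [exact G1|]. rewrite !dist_D2, G2, G3. split; reflexivity.
    + split; [apply Hb; auto|split; apply Hb; auto].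
Qed.


Definition Wv k L d := Rmin 1 (sqrt 3 * L / (sqrt 3 * d + k)).
Definition MA k L d := k^2 * (Wv k L d)^2 / (sqrt 3 * L).

Lemma pow_lt_pos (x : R) : x <> 0 -> 0 < x^2.
Proof. intro. simpl. rewrite Rmult_1_r. apply Rsqr_pos_lt. auto. Qed.

Lemma L2_pos X Y Z : Cr X Y Z <> 0 -> 0 < L2 X Y.
Proof.
  intro HK. unfold L2. unfold Cr in HK.
  destruct (Req_dec (fst Y - fst X) 0) as [E1|E1].
  - destruct (Req_dec (snd Y - snd X) 0) as [E2|E2].
    + exfalso; apply HK; rewrite E1, E2; ring.
    + assert (0 < (snd Y - snd X)^2) by (apply pow_lt_pos; auto).
      assert (Hq := pow2_ge_0 (fst Y - fst X)). lra.
  - assert (0 < (fst Y - fst X)^2) by (apply pow_lt_pos; auto).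
    assert (Hq := pow2_ge_0 (snd Y - snd X)). lra.
Qed.

Lemma side_max A B C X Y Z d0 :
  Cr X Y Z <> 0 -> bnd A B C X Y Z ->
  ((Rabs (Cr X Y Z) <= sqrt 3 * Dt X Y Z /\
     (Rabs (Cr X Y Z) <= sqrt 3 * Dt Y X Z -> Dt X Y Z <= Dt Y X Z) /\ d0 = Dt X Y Z) \/
   (Rabs (Cr X Y Z) <= sqrt 3 * Dt Y X Z /\
     (Rabs (Cr X Y Z) <= sqrt 3 * Dt X Y Z -> Dt Y X Z <= Dt X Y Z) /\ d0 = Dt Y X Z)) ->
  max_area_on A B C X Y (MA (Rabs (Cr X Y Z)) (L2 X Y) d0).
Proof.
  intros HK Hb Hc.
  set (k := Rabs (Cr X Y Z)) in *. set (L := L2 X Y) in *. set (s := sqrt 3) in *.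
  assert (Hs : 0 < s) by apply s3_pos.
  assert (Hk0 : 0 < k) by (apply Rabs_pos_lt; exact HK).
  assert (HL : 0 < L) by (eapply L2_pos; eauto).
  assert (Hd0 : k <= s*d0) by (destruct Hc as [[? [? ?]]|[? [? ?]]]; subst; auto).
  assert (Hden : 0 < s*d0 + k) by lra.
  set (W := Wv k L d0).
  assert (HWd : W = Rmin 1 (s*L/(s*d0+k))) by reflexivity.
  assert (HW1 : W <= 1) by (rewrite HWd; apply Rmin_l).
  assert (HW2 : W <= s*L/(s*d0+k)) by (rewrite HWd; apply Rmin_r).
  assert (HW0 : 0 < W).
  { rewrite HWd; apply Rmin_glb_lt; [lra|]. apply Rdiv_lt_0_compat; [apply Rmult_lt_0_compat; lra|lra]. }
  assert (HW3 : W*(s*d0+k) <= s*L).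
  { apply (Rmult_le_compat_r (s*d0+k)) in HW2; [|lra].
    replace (s * L / (s * d0 + k) * (s * d0 + k)) with (s*L) in HW2 by (field; lra).
    exact HW2. }
  split.
  - destruct (construct A B C X Y Z W HK Hb) as [P [Q [T [HI Ha]]]]; [lra| |].
    + destruct Hc as [[? [? E]]|[? [? E]]]; rewrite <- E; [left|right]; split; auto.
    + exists P, Q, T. split; [exact HI|]. rewrite Ha. reflexivity.
  - intros P Q T HI.
    destruct (analysis A B C X Y Z P Q T HK Hb HI) as [w [Hw [Ha Hcase]]].
    fold k L s in Ha, Hcase. rewrite Ha. unfold MA. fold s W.
    assert (Hww : w <= W).
    { rewrite HWd. apply Rmin_glb; [lra|].
      assert (Hwd : w*(s*d0+k) <= s*L).
      { destruct Hcase as [[G1 G2]|[G1 G2]].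
        - assert (d0 <= Dt X Y Z).
          { destruct Hc as [[? [? E]]|[? [? E]]]; rewrite E; [lra|auto]. }
          assert (0 <= w*(s*(Dt X Y Z - d0))) by (apply Rmult_le_pos; [lra|]; apply Rmult_le_pos; lra).
          lra.
        - assert (d0 <= Dt Y X Z).
          { destruct Hc as [[? [? E]]|[? [? E]]]; rewrite E; [auto|lra]. }
          assert (0 <= w*(s*(Dt Y X Z - d0))) by (apply Rmult_le_pos; [lra|]; apply Rmult_le_pos; lra).
          lra. }
      apply (Rmult_le_reg_r (s*d0+k)); [lra|].
      replace (s * L / (s * d0 + k) * (s * d0 + k)) with (s*L) by (field; lra). exact Hwd. }
    unfold Rdiv. apply Rmult_le_compat_r.
    + left; apply Rinv_0_lt_compat; nra.
    + apply Rmult_le_compat_l; [nra|]. nra.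
Qed.

Lemma max_unique A B C X Y m1 m2 :
  max_area_on A B C X Y m1 -> max_area_on A B C X Y m2 -> m1 = m2.
Proof.
  intros [[P1 [Q1 [T1 [H1 E1]]]] U1] [[P2 [Q2 [T2 [H2 E2]]]] U2].
  apply U1 in H2. apply U2 in H1. lra.
Qed.

Lemma max_admit A B C X Y Z m :
  Cr X Y Z <> 0 -> bnd A B C X Y Z -> max_area_on A B C X Y m ->
  Rabs (Cr X Y Z) <= sqrt 3 * Dt X Y Z \/ Rabs (Cr X Y Z) <= sqrt 3 * Dt Y X Z.
Proof.
  intros HK Hb [[P [Q [T [HI _]]]] _].
  destruct (analysis A B C X Y Z P Q T HK Hb HI) as [w [_ [_ [[G _]|[G _]]]]]; auto.
Qed.

Lemma admit_max A B C X Y Z :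
  Cr X Y Z <> 0 -> bnd A B C X Y Z -> admits A B C X Y ->
  Rabs (Cr X Y Z) <= sqrt 3 * Dt X Y Z \/ Rabs (Cr X Y Z) <= sqrt 3 * Dt Y X Z.
Proof.
  intros HK Hb [P [Q [T HI]]].
  destruct (analysis A B C X Y Z P Q T HK Hb HI) as [w [_ [_ [[G _]|[G _]]]]]; auto.
Qed.


Lemma cos_2PI3 : cos (2*PI/3) = -1/2.
Proof.
  replace (2*PI/3) with (PI - PI/3) by field.
  rewrite Rtrigo_facts.cos_pi_minus, cos_PI3. field.
Qed.

Lemma ang_facts d n K : 0 < n -> n^2 = d^2 + K^2 -> K <> 0 ->
  let th := acos (d/n) in let k := Rabs K in
  (th = PI/3 -> sqrt 3 * d = k) /\ (sqrt 3 * d = k -> th = PI/3) /\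
  (th < PI/3 -> k < sqrt 3*d) /\ (PI/3 <= th -> sqrt 3*d <= k) /\
  (2*PI/3 < th -> sqrt 3 * d < -k) /\ (th = 2*PI/3 -> sqrt 3*d = -k) /\
  (th < 2*PI/3 -> -k < sqrt 3*d).
Proof.
  intros Hn Hn2 HK th k.
  set (s := sqrt 3).
  assert (Hs : 0 < s) by apply s3_pos.
  assert (Hs2 : s^2 = 3) by apply s3_sq.
  assert (Hk2 : k^2 = K^2) by apply pow2_abs.
  assert (Hk0 : 0 < k) by (apply Rabs_pos_lt; exact HK).
  assert (HK2 : 0 < K^2) by (rewrite <- Hk2; nra).
  set (x := d/n).
  assert (Hdx : d = x*n) by (unfold x; field; lra).
  assert (Hx : -1 < x < 1).
  { assert (x^2 < 1).
    { assert (x^2*n^2 < 1*n^2) by (replace (x^2*n^2) with (d^2) by (rewrite Hdx; ring); lra).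
      apply Rmult_lt_reg_r in H; [exact H|nra]. }
    split; nra. }
  assert (Hc : cos th = x) by (apply cos_acos; lra).
  assert (Hb : 0 <= th <= PI) by apply acos_bound.
  assert (HPI := PI_RGT_0).
  assert (Hsd2 : (s*d)^2 = 3*d^2) by (rewrite <- Hs2; ring).
  assert (Hkd : n^2 = d^2 + k^2) by lra.
  assert (A1 : th = PI/3 -> x = 1/2) by (intro E; rewrite <- Hc, E; apply cos_PI3).
  assert (A2 : th < PI/3 -> x > 1/2).
  { intro E. rewrite <- Hc, <- cos_PI3. apply cos_decreasing_1; lra. }
  assert (A3 : PI/3 < th -> x < 1/2).
  { intro E. rewrite <- Hc, <- cos_PI3. apply cos_decreasing_1; lra. }
  assert (A4 : th = 2*PI/3 -> x = -1/2) by (intro E; rewrite <- Hc, E; apply cos_2PI3).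
  assert (A5 : 2*PI/3 < th -> x < -1/2).
  { intro E. rewrite <- Hc, <- cos_2PI3. apply cos_decreasing_1; lra. }
  assert (A6 : th < 2*PI/3 -> x > -1/2).
  { intro E. rewrite <- Hc, <- cos_2PI3. apply cos_decreasing_1; lra. }
  split; [|split; [|split; [|split; [|split; [|split]]]]].
  - intro E. apply A1 in E. assert (Ed : 2*d = n) by (rewrite Hdx, E; field).
    apply sq_eq_pos; [nra|lra|]. nra.
  - intro E. assert (Hd : 0 < d) by nra.
    assert (Ed : n = 2*d) by (apply sq_eq_pos; nra).
    assert (Ex : x = 1/2) by (unfold x; rewrite Ed; field; lra).
    unfold th. fold x. rewrite Ex, <- cos_PI3. apply acos_cos. lra.
  - intro E. apply A2 in E. assert (Ed : 2*d > n) by nra.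
    assert (Hd : 0 < s*d) by nra. assert (4*d^2 > n^2) by nra. nra.
  - intro E. destruct (Rle_dec d 0) as [Hd|Hd]; [nra|].
    assert (x <= 1/2).
    { destruct (Req_dec th (PI/3)) as [E'|E']; [rewrite (A1 E'); lra|].
      left; apply A3; lra. }
    assert (Ed : 2*d <= n) by nra. assert (4*d^2 <= n^2) by nra. nra.
  - intro E. apply A5 in E. assert (Ed : -2*d > n) by nra.
    assert (Hd : 0 < -(s*d)) by nra. assert (4*d^2 > n^2) by nra. nra.
  - intro E. apply A4 in E. assert (Ed : -2*d = n) by (rewrite Hdx, E; field).
    assert (- (s*d) = k) by (apply sq_eq_pos; nra). lra.
  - intro E. apply A6 in E. assert (Ed : -2*d < n) by nra.
    destruct (Rle_dec 0 d) as [Hd|Hd]; [nra|].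
    assert (4*d^2 < n^2) by nra. nra.
Qed.


Lemma tri_alg dA dB dC k s : 0 < s -> s^2 = 3 -> 0 < k ->
  k^2 = dA*dB+dB*dC+dC*dA -> dA < dB -> dB < dC -> 0 < dA + dB ->
  s*dA < k /\ k < s*dC /\ (s*dA <= -k -> (s*dB - k)*(s*dC-k) >= 4*k^2).
Proof.
  intros Hs Hs2 Hk Hk2 H1 H2 H3.
  set (p := s*dA). set (q := s*dB). set (r := s*dC).
  assert (E : p*q + q*r + r*p = 3*k^2) by (unfold p, q, r; rewrite Hk2, <- Hs2; ring).
  assert (Hpq : p < q) by (unfold p, q; nra).
  assert (Hqr : q < r) by (unfold q, r; nra).
  assert (Hpq0 : 0 < p + q) by (unfold p, q; nra).
  split; [|split].
  - destruct (Rlt_le_dec p k) as [G|G]; [exact G|exfalso].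
    assert (p*q > k*k) by nra. assert (q*r > k*k) by nra. assert (r*p >= k*k) by nra. nra.
  - destruct (Rlt_le_dec k r) as [G|G]; [exact G|exfalso].
    assert (r*(p+q) <= k*(p+q)) by nra.
    assert (0 < q) by lra. assert (0 < k + p) by lra.
    assert ((k+p)*(k+q) < 4*k^2) by nra. nra.
  - intro G.
    assert (Hqr0 : 0 < q + r) by lra.
    assert (p*(q+r) <= -k*(q+r)) by nra.
    nra.
Qed.


Lemma MA_one k L d0 : 0 < k -> 0 < L -> 0 < sqrt 3 * d0 + k ->
  k <= sqrt 3 * (L - d0) -> MA k L d0 = k^2/(sqrt 3 * L).
Proof.
  intros Hk HL Hd H. unfold MA, Wv. rewrite Rmin_left.
  - field. assert (H' := s3_pos). lra.
  - apply (Rmult_le_reg_r (sqrt 3 * d0 + k)); [lra|].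
    replace (sqrt 3 * L / (sqrt 3 * d0 + k) * (sqrt 3 * d0 + k)) with (sqrt 3 * L) by (field; lra).
    lra.
Qed.

Lemma MA_two k L d0 : 0 < k -> 0 < L -> 0 < sqrt 3 * d0 + k ->
  sqrt 3 * (L - d0) < k -> MA k L d0 = sqrt 3 * k^2 * L/(sqrt 3 * d0 + k)^2.
Proof.
  intros Hk HL Hd H. assert (Hs := s3_pos). assert (Hs2 := s3_sq). unfold MA, Wv. rewrite Rmin_right.
  - field. repeat split; lra.
  - apply (Rmult_le_reg_r (sqrt 3 * d0 + k)); [lra|].
    replace (sqrt 3 * L / (sqrt 3 * d0 + k) * (sqrt 3 * d0 + k)) with (sqrt 3 * L) by (field; lra).
    lra.
Qed.

Lemma frac_lt a b c d : 0 < b -> 0 < d -> a*d < c*b -> a/b < c/d.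
Proof.
  intros Hb Hd H.
  assert (E : c/d - a/b = (c*b - a*d) * / (b*d)) by (field; lra).
  assert (0 < (c*b - a*d) * / (b*d)).
  { apply Rmult_lt_0_compat; [lra|]. apply Rinv_0_lt_compat; nra. }
  lra.
Qed.

Lemma frac_eq a b c d : 0 < b -> 0 < d -> a*d = c*b -> a/b = c/d.
Proof.
  intros Hb Hd H. assert (E : c/d - a/b = (c*b - a*d) * / (b*d)) by (field; lra).
  rewrite H in E. replace ((c*b - c*b) * / (b*d)) with 0 in E by ring. lra.
Qed.


Lemma pos_factor a b k : a*b >= 4*k^2 -> 0 < k -> 0 < b -> 0 < a.
Proof. intros. nra. Qed.

Theorem mainTheorem1 (A B C : pt) :
  ~ collinear A B C ->
  dist B C > dist C A -> dist C A > dist A B ->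
  let alpha := angle A B C in
  let beta := angle B C A in
  (exists ma, max_area_on A B C B C ma) /\
  (exists mb, max_area_on A B C C A mb) /\
  (admits A B C A B -> exists mc, max_area_on A B C A B mc) /\
  (forall ma mb, max_area_on A B C B C ma -> max_area_on A B C C A mb ->
    (beta <> PI / 3 ->
       mb < ma /\ (forall mc, max_area_on A B C A B mc -> mc < ma)) /\
    (beta = PI / 3 ->
       exists mc, max_area_on A B C A B mc /\ mc = ma /\ mb < ma) /\
    (alpha > 2 * PI / 3 ->
       exists mc, max_area_on A B C A B mc /\ mc < mb /\ mc < ma) /\
    (alpha = 2 * PI / 3 ->
       exists mc, max_area_on A B C A B mc /\ mc = mb /\ mb < ma) /\
    (PI / 3 < alpha < 2 * PI / 3 -> beta < PI / 3 ->
       mb < ma /\ (forall mc, max_area_on A B C A B mc -> mb < mc)) /\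
    (beta >= PI / 3 ->
       mb < ma /\ (forall mc, max_area_on A B C A B mc -> mb < mc))).
Proof.
  intros Hcol Hab Hbc alpha beta.
  set (s := sqrt 3).
  assert (Hs : 0 < s) by apply s3_pos.
  assert (Hs2 : s^2 = 3) by apply s3_sq.
  set (K := Cr A B C). set (k := Rabs K).
  set (dA := Dt A B C). set (dB := Dt B C A). set (dC := Dt C A B).
  assert (HK : K <> 0) by (intro E; apply Hcol; exact E).
  assert (Hk0 : 0 < k) by (apply Rabs_pos_lt; exact HK).
  assert (CBCA : Cr B C A = K) by (unfold K, Cr; ring).
  assert (CCAB : Cr C A B = K) by (unfold K, Cr; ring).
  assert (bBC : bnd A B C B C A) by (intro P; unfold on_boundary; tauto).
  assert (bCA : bnd A B C C A B) by (intro P; unfold on_boundary; tauto).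
  assert (bAB : bnd A B C A B C) by (intro P; unfold on_boundary; tauto).
  assert (DCBA : Dt C B A = dC) by (unfold dC, Dt; ring).
  assert (DACB : Dt A C B = dA) by (unfold dA, Dt; ring).
  assert (DBAC : Dt B A C = dB) by (unfold dB, Dt; ring).
  assert (LBC : L2 B C = dB + dC) by (unfold L2, dB, dC, Dt; ring).
  assert (LCA : L2 C A = dC + dA) by (unfold L2, dA, dC, Dt; ring).
  assert (LAB : L2 A B = dA + dB) by (unfold L2, dA, dB, Dt; ring).
  assert (Hk2 : k^2 = dA*dB+dB*dC+dC*dA).
  { unfold k. rewrite pow2_abs. unfold K, Cr, dA, dB, dC, Dt. ring. }
  assert (HLab : L2 B C > L2 C A).
  { destruct (Rle_lt_dec (L2 B C) (L2 C A)) as [G|G]; [|lra].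
    exfalso. apply sqrt_le_1_alt in G. change (dist B C <= dist C A) in G. lra. }
  assert (HLbc : L2 C A > L2 A B).
  { destruct (Rle_lt_dec (L2 C A) (L2 A B)) as [G|G]; [|lra].
    exfalso. apply sqrt_le_1_alt in G. change (dist C A <= dist A B) in G. lra. }
  assert (HLc : 0 < L2 A B) by (apply (L2_pos A B C); exact HK).
  rewrite LBC, LCA, LAB in *.
  assert (H1 : dA < dB) by lra. assert (H2 : dB < dC) by lra.
  destruct (tri_alg dA dB dC k s Hs Hs2 Hk0 Hk2 H1 H2 HLc) as [F1 [F2 F3]].
  assert (Hal : alpha = acos (dA / (dist A B * dist A C))) by reflexivity.
  assert (Hbe : beta = acos (dB / (dist B C * dist B A))) by reflexivity.
  assert (LAC : L2 A C = dC + dA) by (unfold L2, dA, dC, Dt; ring).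
  assert (LBA : L2 B A = dA + dB) by (unfold L2, dA, dB, Dt; ring).
  assert (HnA : 0 < dist A B * dist A C).
  { apply Rmult_lt_0_compat; apply sqrt_lt_R0; fold (L2 A B) (L2 A C); lra. }
  assert (HnB : 0 < dist B C * dist B A).
  { apply Rmult_lt_0_compat; apply sqrt_lt_R0; fold (L2 B C) (L2 B A); lra. }
  assert (HnA2 : (dist A B * dist A C)^2 = dA^2 + K^2).
  { rewrite Rpow_mult_distr. unfold dist.
    rewrite !pow2_sqrt; try (apply Rplus_le_le_0_compat; apply pow2_ge_0).
    unfold dA, K, Dt, Cr. ring. }
  assert (HnB2 : (dist B C * dist B A)^2 = dB^2 + K^2).
  { rewrite Rpow_mult_distr. unfold dist.
    rewrite !pow2_sqrt; try (apply Rplus_le_le_0_compat; apply pow2_ge_0).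
    unfold dB, K, Dt, Cr. ring. }
  destruct (ang_facts dA (dist A B * dist A C) K HnA HnA2 HK)
    as [_ [_ [_ [_ [A5 [A6 A7]]]]]].
  destruct (ang_facts dB (dist B C * dist B A) K HnB HnB2 HK)
    as [B1 [B2 [B3 [B4 _]]]].
  rewrite <- Hal in A5, A6, A7. rewrite <- Hbe in B1, B2, B3, B4.
  fold s k in A5, A6, A7, B1, B2, B3, B4.
  assert (Ma_ok1 : k <= s*dB -> max_area_on A B C B C (MA k (dB+dC) dB)).
  { intro G. rewrite <- LBC. unfold k. rewrite <- CBCA.
    apply side_max with (Z := A); [rewrite CBCA; exact HK|exact bBC|].
    left. rewrite CBCA, DCBA. fold k. split; [exact G|split; [intro; fold dA dB dC; lra|reflexivity]]. }
  assert (Ma_ok2 : s*dB < k -> max_area_on A B C B C (MA k (dB+dC) dC)).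
  { intro G. rewrite <- LBC. unfold k. rewrite <- CBCA.
    apply side_max with (Z := A); [rewrite CBCA; exact HK|exact bBC|].
    right. rewrite CBCA, DCBA. fold k. fold dA dB dC s; split; [lra|split; [intro; lra|reflexivity]]. }
  assert (Mb_ok : max_area_on A B C C A (MA k (dC+dA) dC)).
  { rewrite <- LCA. unfold k. rewrite <- CCAB.
    apply side_max with (Z := B); [rewrite CCAB; exact HK|exact bCA|].
    left. rewrite CCAB, DACB. fold k. fold dA dB dC s; split; [lra|split; [intro; lra|reflexivity]]. }
  assert (Mc_ok : k <= s*dB -> max_area_on A B C A B (MA k (dA+dB) dB)).
  { intro G. rewrite <- LAB. unfold k. rewrite <- (CCAB) at 1.
    replace (Cr C A B) with (Cr A B C) by (rewrite CCAB; reflexivity).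
    apply side_max with (Z := C); [exact HK|exact bAB|].
    right. rewrite DBAC. fold K k. fold dA dB dC s; split; [lra|split; [intro; lra|reflexivity]]. }
  assert (Mc_adm : forall mc, max_area_on A B C A B mc -> k <= s*dB /\ mc = MA k (dA+dB) dB).
  { intros mc Hmc.
    assert (G : k <= s*dB).
    { destruct (max_admit A B C A B C mc HK bAB Hmc) as [G|G];
        rewrite ?DBAC in G; fold K k s dA in G; lra. }
    split; [exact G|]. apply (max_unique A B C A B); [exact Hmc|exact (Mc_ok G)]. }
  assert (Va1 : k <= s*dB -> MA k (dB+dC) dB = k^2/(s*(dB+dC))).
  { intro G. apply MA_one; fold s; try (replace (dB + dC - dB) with dC by ring); lra. }
  assert (Va2 : s*dB < k -> MA k (dB+dC) dC = s*k^2*(dB+dC)/(s*dC+k)^2).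
  { intro G. apply MA_two; fold s; try (replace (dB + dC - dC) with dB by ring); lra. }
  assert (Vb : MA k (dC+dA) dC = s*k^2*(dC+dA)/(s*dC+k)^2).
  { apply MA_two; fold s; try (replace (dC + dA - dC) with dA by ring); lra. }
  assert (Vc : k <= s*dB -> MA k (dA+dB) dB = s*k^2*(dA+dB)/(s*dB+k)^2).
  { intro G. apply MA_two; fold s; try (replace (dA + dB - dB) with dA by ring); lra. }
  fold s in Va1, Va2, Vb, Vc.
  assert (I1 : (s*dC+k)^2 - s^2*((dB+dC)*(dC+dA)) = 2*k*(s*dC-k)).
  { rewrite Hs2. replace ((s*dC+k)^2) with (s^2*dC^2 + 2*s*dC*k + k^2) by ring.
    rewrite Hs2. replace (3*((dB+dC)*(dC+dA))) with (3*(dA*dB+dB*dC+dC*dA) + 3*dC^2) by ring.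
    rewrite <- Hk2. ring. }
  assert (I2 : (s*dB+k)^2 - s^2*((dA+dB)*(dB+dC)) = 2*k*(s*dB-k)).
  { rewrite Hs2. replace ((s*dB+k)^2) with (s^2*dB^2 + 2*s*dB*k + k^2) by ring.
    rewrite Hs2. replace (3*((dA+dB)*(dB+dC))) with (3*(dA*dB+dB*dC+dC*dA) + 3*dB^2) by ring.
    rewrite <- Hk2. ring. }
  assert (I3 : (dA+dB)*(s*dC+k)^2 - (dC+dA)*(s*dB+k)^2 = 2*k*(dC-dB)*(k+s*dA)).
  { assert (P : (dA+dB)*(s*dC+k)^2 - (dC+dA)*(s*dB+k)^2 =
                (dC-dB)*(s^2*(dA*dB+dB*dC+dC*dA) + 2*s*dA*k - k^2)) by ring.
    rewrite P, Hs2, <- Hk2. ring. }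
  assert (Hk2p : 0 < k^2) by nra.
  assert (HdC : 0 < s*dC + k) by lra.
  assert (HdB0 : 0 < dB) by lra.
  assert (HsdB : 0 < s*dB) by (apply Rmult_lt_0_compat; lra).
  assert (HdB : 0 < s*dB + k) by lra.
  assert (PdC : 0 < (s*dC+k)^2) by (apply pow_lt; exact HdC).
  assert (PdB : 0 < (s*dB+k)^2) by (apply pow_lt; exact HdB).
  assert (PLa : 0 < s*(dB+dC)) by (apply Rmult_lt_0_compat; lra).
  assert (Psk : 0 < s*k^2) by (apply Rmult_lt_0_compat; lra).
  assert (Cba1 : k <= s*dB -> s*k^2*(dC+dA)/(s*dC+k)^2 < k^2/(s*(dB+dC))).
  { intro G. apply frac_lt; [exact PdC|exact PLa|].
    assert (0 < k^2 * (2*k*(s*dC-k))).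
    { apply Rmult_lt_0_compat; [lra|]. apply Rmult_lt_0_compat; lra. }
    replace (s*k^2*(dC+dA)*(s*(dB+dC))) with (k^2*(s^2*((dB+dC)*(dC+dA)))) by ring.
    assert (E : k^2*(s*dC+k)^2 - k^2*(s^2*((dB+dC)*(dC+dA))) = k^2*(2*k*(s*dC-k)))
      by (rewrite <- I1; ring).
    lra. }
  assert (Cba2 : s*dB < k -> s*k^2*(dC+dA)/(s*dC+k)^2 < s*k^2*(dB+dC)/(s*dC+k)^2).
  { intro G. unfold Rdiv. apply Rmult_lt_compat_r; [apply Rinv_0_lt_compat; exact PdC|].
    apply Rmult_lt_compat_l; [exact Psk|]. lra. }
  assert (Cca : k < s*dB -> s*k^2*(dA+dB)/(s*dB+k)^2 < k^2/(s*(dB+dC))).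
  { intro G. apply frac_lt; [exact PdB|exact PLa|].
    assert (0 < k^2 * (2*k*(s*dB-k))).
    { apply Rmult_lt_0_compat; [lra|]. apply Rmult_lt_0_compat; lra. }
    replace (s*k^2*(dA+dB)*(s*(dB+dC))) with (k^2*(s^2*((dA+dB)*(dB+dC)))) by ring.
    assert (E : k^2*(s*dB+k)^2 - k^2*(s^2*((dA+dB)*(dB+dC))) = k^2*(2*k*(s*dB-k)))
      by (rewrite <- I2; ring).
    lra. }
  assert (Cca_eq : k = s*dB -> s*k^2*(dA+dB)/(s*dB+k)^2 = k^2/(s*(dB+dC))).
  { intro G. apply frac_eq; [exact PdB|exact PLa|].
    replace (s*k^2*(dA+dB)*(s*(dB+dC))) with (k^2*(s^2*((dA+dB)*(dB+dC)))) by ring.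
    assert (E : k^2*(s*dB+k)^2 - k^2*(s^2*((dA+dB)*(dB+dC))) = k^2*(2*k*(s*dB-k)))
      by (rewrite <- I2; ring).
    replace (s*dB-k) with 0 in E by lra. replace (k^2*(2*k*0)) with 0 in E by ring. lra. }
  assert (ECB : s*k^2*(dA+dB)*(s*dC+k)^2 - s*k^2*(dC+dA)*(s*dB+k)^2
               = s*k^2*(2*k*(dC-dB)*(k+s*dA))) by (rewrite <- I3; ring).
  assert (Ccb : k <= s*dB -> s*dA + k < 0 ->
            s*k^2*(dA+dB)/(s*dB+k)^2 < s*k^2*(dC+dA)/(s*dC+k)^2).
  { intros G G'. apply frac_lt; [exact PdB|exact PdC|].
    assert (0 < s*k^2*(2*k*(dC-dB)*(-(k+s*dA)))).
    { apply Rmult_lt_0_compat; [exact Psk|].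
      apply Rmult_lt_0_compat; [|lra]. apply Rmult_lt_0_compat; lra. }
    lra. }
  assert (Ccb_eq : s*dA + k = 0 ->
            s*k^2*(dA+dB)/(s*dB+k)^2 = s*k^2*(dC+dA)/(s*dC+k)^2).
  { intros G'. apply frac_eq; [exact PdB|exact PdC|].
    replace (k + s*dA) with 0 in ECB by lra.
    replace (s*k^2*(2*k*(dC-dB)*0)) with 0 in ECB by ring. lra. }
  assert (Cbc : k <= s*dB -> 0 < s*dA + k ->
            s*k^2*(dC+dA)/(s*dC+k)^2 < s*k^2*(dA+dB)/(s*dB+k)^2).
  { intros G G'. apply frac_lt; [exact PdC|exact PdB|].
    assert (0 < s*k^2*(2*k*(dC-dB)*(k+s*dA))).
    { apply Rmult_lt_0_compat; [exact Psk|].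
      apply Rmult_lt_0_compat; [|lra]. apply Rmult_lt_0_compat; lra. }
    lra. }
  assert (Mba : forall ma, max_area_on A B C B C ma -> MA k (dC+dA) dC < ma).
  { intros ma Hma. rewrite Vb. destruct (Rle_lt_dec k (s*dB)) as [G|G].
    - rewrite (max_unique _ _ _ _ _ _ _ Hma (Ma_ok1 G)), (Va1 G). apply Cba1; exact G.
    - rewrite (max_unique _ _ _ _ _ _ _ Hma (Ma_ok2 G)), (Va2 G). apply Cba2; exact G. }
  split; [destruct (Rle_lt_dec k (s*dB)) as [G|G]; eexists; [apply Ma_ok1|apply Ma_ok2]; exact G|].
  split; [exists (MA k (dC+dA) dC); exact Mb_ok|].
  split.
  { intro Had. destruct (admit_max A B C A B C HK bAB Had) as [G|G];
      rewrite ?DBAC in G; fold K k s dA in G; [lra|]. eexists; apply Mc_ok; exact G. }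
  intros ma mb Hma Hmb.
  rewrite (max_unique _ _ _ _ _ _ _ Hmb Mb_ok) in *.
  assert (Hba := Mba ma Hma).
  split; [|split; [|split; [|split; [|split]]]].
  -
    intro Hne. split; [exact Hba|].
    intros mc Hmc. destruct (Mc_adm mc Hmc) as [G Emc].
    assert (G' : k < s*dB) by (destruct (Req_dec k (s*dB)) as [E|E];
      [exfalso; apply Hne; apply B2; lra|lra]).
    rewrite Emc, (Vc G), (max_unique _ _ _ _ _ _ _ Hma (Ma_ok1 G)), (Va1 G).
    apply Cca; exact G'.
  - intro Heq. apply B1 in Heq.
    assert (G : k <= s*dB) by lra.
    exists (MA k (dA+dB) dB). split; [exact (Mc_ok G)|]. split; [|exact Hba].
    rewrite (Vc G), (max_unique _ _ _ _ _ _ _ Hma (Ma_ok1 G)), (Va1 G).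
    apply Cca_eq; lra.
  - intro Hal2. apply A5 in Hal2.
    assert (G : k < s*dB).
    { assert (P4 := F3 ltac:(lra)). apply (pos_factor (s*dB-k) (s*dC-k) k) in P4; lra. }
    exists (MA k (dA+dB) dB). split; [exact (Mc_ok ltac:(lra))|].
    assert (Hcb : MA k (dA+dB) dB < MA k (dC+dA) dC).
    { rewrite (Vc ltac:(lra)), Vb. apply Ccb; lra. }
    split; [exact Hcb|lra].
  - intro Hal2. apply A6 in Hal2.
    assert (G : k < s*dB).
    { assert (P4 := F3 ltac:(lra)). apply (pos_factor (s*dB-k) (s*dC-k) k) in P4; lra. }
    exists (MA k (dA+dB) dB). split; [exact (Mc_ok ltac:(lra))|].
    split; [|exact Hba].
    rewrite (Vc ltac:(lra)), Vb. apply Ccb_eq; lra.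
  - intros [_ Hal2] Hbe2. apply A7 in Hal2. apply B3 in Hbe2.
    split; [exact Hba|]. intros mc Hmc. destruct (Mc_adm mc Hmc) as [G Emc].
    rewrite Emc, (Vc G), Vb. apply Cbc; lra.
  - intro Hbe2. apply Rge_le in Hbe2. apply B4 in Hbe2.
    split; [exact Hba|]. intros mc Hmc. destruct (Mc_adm mc Hmc) as [G Emc].
    assert (G' : k = s*dB) by lra.
    assert (G2 : 0 < s*dA + k).
    { destruct (Rlt_le_dec 0 (s*dA+k)) as [Q|Q]; [exact Q|].
      assert (P4 := F3 ltac:(lra)). apply (pos_factor (s*dB-k) (s*dC-k) k) in P4; lra. }
    rewrite Emc, (Vc G), Vb. apply Cbc; lra.
Qed.
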